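(* Let $R$ be a commutative associative unital ring and $B$ a unital $R$-algebra with identity $1$. Assume $B=Rb_0\oplus\mathrm{ac}(B)$ for some $b_0\in B$ such that $Rb_0$ is free with basis $\{b_0\}$. Define $\pi\colon B\to R$ by $b=\pi(b)b_0+b_{\mathrm{ac}}$ with $b_{\mathrm{ac}}\in\mathrm{ac}(B)$, and $\beta_0\colon B\times B\to R$, $\beta_0(a,b)=\pi(ab)$. Then $\beta_0\in\mathrm{IBF}_R(B)$, $(B,\beta_0)$ satisfies the IBF-principle, and $\tilde\beta_0\colon\mathrm{AC}(B)\to R$, $\bar b\mapsto\beta_0(b,1)$, is a well-defined $R$-module isomorphism.
   Context: $\mathrm{ac}(B)=(B,B,B)+[B,B]$, where $(B,B,B)$ is the additive span of all associators $(ab)c-a(bc)$ and $[B,B]$ the additive span of all commutators $ab-ba$; $\mathrm{AC}(B)=B/\mathrm{ac}(B)$. $\mathrm{IBF}_R(B)$ is the $R$-module of $R$-bilinear forms $\beta\colon B\times B\to R$ with $\beta(ab,c)=\beta(a,bc)=\beta(b,ca)$. $\mathbf{IBF}_R(B)$ is the quotient of $B\otimes_R B$ by the $R$-span of all $ab\otimes c-a\otimes bc$ and $ab\otimes c-b\otimes ca$. $(B,\beta)$ satisfies the IBF-principle if $\beta\in\mathrm{IBF}_R(B)$ and the induced map $\mathbf{IBF}_R(B)\to R$, $\overline{a\otimes b}\mapsto\beta(a,b)$, is an $R$-module isomorphism. *)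

(* Defs.v *)
From HB Require Import structures.
From mathcomp Require Import all_boot all_order all_algebra.
From mathcomp.multinomials Require Import freeg.
Set Implicit Arguments. Unset Strict Implicit. Unset Printing Implicit Defensive.
Import Order.TTheory GRing.Theory Num.Theory.
Local Open Scope ring_scope.

Section NonAssoc.
Context (R : comNzRingType) (B : lmodType R) (mul : B -> B -> B) (one : B).

Definition unital_algebra : Prop :=
  [/\ forall (r : R) (a a' b : B), mul (r *: a + a') b = r *: mul a b + mul a' b,
      forall (r : R) (a b b' : B), mul a (r *: b + b') = r *: mul a b + mul a b',
      forall b, mul one b = b &
      forall b, mul b one = b].

Definition associator (a b c : B) : B := mul (mul a b) c - mul a (mul b c).
Definition commutator (a b : B) : B := mul a b - mul b a.

Inductive in_ac : B -> Prop :=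
  | ac_associator a b c : in_ac (associator a b c)
  | ac_commutator a b : in_ac (commutator a b)
  | ac_zero : in_ac 0
  | ac_add x y : in_ac x -> in_ac y -> in_ac (x + y)
  | ac_opp x : in_ac x -> in_ac (- x).

Definition is_IBF (beta : B -> B -> R) : Prop :=
  [/\ forall (r : R) (a a' b : B), beta (r *: a + a') b = r * beta a b + beta a' b,
      forall (r : R) (a b b' : B), beta a (r *: b + b') = r * beta a b + beta a b',
      forall a b c, beta (mul a b) c = beta a (mul b c) &
      forall a b c, beta (mul a b) c = beta b (mul c a)].

(* The free R-module on B x B; B (x)_R B is its quotient by the bilinearity
   relations, and bold IBF_R(B) is the further quotient by the IBF relations.
   [ibf_rel D] says D lies in the R-submodule generated by all these relations,
   i.e. D maps to 0 in bold IBF_R(B). *)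
Definition FB := {freeg (B * B) / R}.
Definition gen (a b : B) : FB := << (a, b) >>.

Inductive ibf_rel : FB -> Prop :=
  | rel_addl a a' b : ibf_rel (gen (a + a') b - gen a b - gen a' b)
  | rel_addr a b b' : ibf_rel (gen a (b + b') - gen a b - gen a b')
  | rel_scalel (r : R) a b : ibf_rel (gen (r *: a) b - r *: gen a b)
  | rel_scaler (r : R) a b : ibf_rel (gen a (r *: b) - r *: gen a b)
  | rel_ibf1 a b c : ibf_rel (gen (mul a b) c - gen a (mul b c))
  | rel_ibf2 a b c : ibf_rel (gen (mul a b) c - gen b (mul c a))
  | rel_zero : ibf_rel 0
  | rel_add D E : ibf_rel D -> ibf_rel E -> ibf_rel (D + E)
  | rel_scale (r : R) D : ibf_rel D -> ibf_rel (r *: D).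

Definition beta_lift (beta : B -> B -> R) (D : FB) : R :=
  fglift (fun p : B * B => (beta p.1 p.2 : R^o)) D.

(* IBF-principle: beta \in IBF_R(B) and the induced map bold IBF_R(B) -> R is
   an R-module isomorphism: it is well defined and injective on the quotient
   (its kernel on the free module is exactly the relation submodule) and it is
   surjective (R-linearity is automatic for a map induced from fglift). *)
Definition IBF_principle (beta : B -> B -> R) : Prop :=
  [/\ is_IBF beta,
      forall D : FB, beta_lift beta D = 0 <-> ibf_rel D &
      forall r : R, exists D : FB, beta_lift beta D = r].

End NonAssoc.

(* Main.v *)
Require Import Defs.
From HB Require Import structures.
From mathcomp Require Import all_boot all_order all_algebra.
From mathcomp.multinomials Require Import freeg.
Import GRing.Theory.
Local Open Scope ring_scope.
Set Implicit Arguments.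
Section Gen.
Context (R : comNzRingType) (K : choiceType) (M : lmodType R).
HB.instance Definition _ (f : K -> M) :=
  GRing.isAdditive.Build {freeg K / R} M (fglift f) (lift_is_additive f).

Lemma scaleU (c k : R) (x : K) : c *: << k *g x >> = << c * k *g x >> :> {freeg K / R}.
Proof. by apply/eqP/freeg_eqP => y; rewrite coeffZ !coeffU mulrA. Qed.

Lemma fglift_scale (f : K -> M) (c : R) (D : {freeg K / R}) :
  fglift f (c *: D) = c *: fglift f D.
Proof.
rewrite -{1}(freeg_sumE D) scaler_sumr raddf_sum.
rewrite -[in RHS](freeg_sumE D) raddf_sum scaler_sumr.
apply: eq_bigr => z _; rewrite scaleU; by rewrite /= !liftU scalerA.
Qed.
End Gen.

Section Cong.
Context (V : zmodType) (P : V -> Prop)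
  (P0 : P 0) (PD : forall x y, P x -> P y -> P (x + y)) (PN : forall x, P x -> P (- x)).
Definition Q x y := P (x - y).
Lemma Qrefl x : Q x x. Proof. by rewrite /Q subrr. Qed.
Lemma Qsym x y : Q x y -> Q y x. Proof. by move=> /PN; rewrite /Q opprB. Qed.
Lemma Qtrans x y z : Q x y -> Q y z -> Q x z.
Proof. by move=> h1 h2; have := PD h1 h2; rewrite /Q addrA subrK. Qed.
Lemma QD x y x' y' : Q x x' -> Q y y' -> Q (x + y) (x' + y').
Proof. by move=> h1 h2; have := PD h1 h2; rewrite /Q opprD addrACA. Qed.
Lemma QN x y : Q x y -> Q (- x) (- y).
Proof. by move=> /PN; rewrite /Q opprD. Qed.
Lemma QB x y x' y' : Q x x' -> Q y y' -> Q (x - y) (x' - y').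
Proof. by move=> h1 h2; apply: QD => //; apply: QN. Qed.
Lemma Q0 x : Q x 0 <-> P x. Proof. by rewrite /Q subr0. Qed.
End Cong.
Arguments Q {V} P x y.
Arguments Qrefl {V P} P0 x.
Arguments Qsym {V P} PN {x y}.
Arguments Qtrans {V P} PD {x y z}.
Arguments QD {V P} PD {x y x' y'}.
Arguments QN {V P} PN {x y}.
Arguments QB {V P} PD PN {x y x' y'}.
Section Main.
Context (R : comNzRingType) (B : lmodType R) (mul : B -> B -> B) (one : B)
  (b0 : B) (pi : B -> R).
Hypothesis HU : unital_algebra mul one.
Hypothesis Hdir : forall r : R, in_ac mul (r *: b0) -> r *: b0 = 0.
Hypothesis Hfree : forall r : R, r *: b0 = 0 -> r = 0.
Hypothesis Hpi : forall b : B, in_ac mul (b - pi b *: b0).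

Notation A := (in_ac mul).
Notation E := (Q A).
Let A0 : A 0. Proof. exact: ac_zero. Qed.
Let AD x y : A x -> A y -> A (x + y). Proof. exact: ac_add. Qed.
Let AN x : A x -> A (- x). Proof. exact: ac_opp. Qed.

Lemma mulZDl r a a' b : mul (r *: a + a') b = r *: mul a b + mul a' b.
Proof. by case: HU. Qed.
Lemma mulZDr r a b b' : mul a (r *: b + b') = r *: mul a b + mul a b'.
Proof. by case: HU. Qed.
Lemma mul1x b : mul one b = b. Proof. by case: HU. Qed.
Lemma mulx1 b : mul b one = b. Proof. by case: HU. Qed.

Lemma mulBl a a' b : mul (a - a') b = mul a b - mul a' b.
Proof. by rewrite addrC -scaleN1r mulZDl scaleN1r addrC. Qed.
Lemma mulBr a b b' : mul a (b - b') = mul a b - mul a b'.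
Proof. by rewrite addrC -scaleN1r mulZDr scaleN1r addrC. Qed.
Lemma mul0l b : mul 0 b = 0.
Proof. by rewrite -[in LHS](subrr one) mulBl subrr. Qed.
Lemma mul0r b : mul b 0 = 0.
Proof. by rewrite -[in LHS](subrr one) mulBr subrr. Qed.
Lemma mulZl r a b : mul (r *: a) b = r *: mul a b.
Proof. by rewrite -[r *: a]addr0 mulZDl mul0l addr0. Qed.
Lemma mulZr r a b : mul a (r *: b) = r *: mul a b.
Proof. by rewrite -[r *: b]addr0 mulZDr mul0r addr0. Qed.

Lemma AZ r x : A x -> A (r *: x).
Proof.
elim=> {x} [a b c|a b||x y _ hx _ hy|x _ hx].
- by rewrite /associator scalerBr -!mulZl; apply: ac_associator.
- by rewrite /commutator scalerBr -mulZl -mulZr; apply: ac_commutator.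
- by rewrite scaler0.
- by rewrite scalerDr; apply: ac_add.
- by rewrite scalerN; apply: ac_opp.
Qed.

Lemma EZ r x y : E x y -> E (r *: x) (r *: y).
Proof. by rewrite /Q -scalerBr; apply: AZ. Qed.

Lemma Epi b : E b (pi b *: b0). Proof. exact: Hpi. Qed.

Lemma sc_eq p q : E (p *: b0) (q *: b0) -> p = q.
Proof. by rewrite /Q -scalerBl => /Hdir /Hfree /eqP; rewrite subr_eq0 => /eqP. Qed.

Lemma pi_congr x y : E x y -> pi x = pi y.
Proof.
move=> h; apply: sc_eq.
apply: (Qtrans AD) (Epi y); apply: (Qtrans AD) h.
exact: (Qsym AN (Epi x)).
Qed.

Lemma pi_lin r a a' : pi (r *: a + a') = r * pi a + pi a'.
Proof.
apply: sc_eq; rewrite scalerDl -scalerA.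
apply: (Qtrans AD) (Qsym AN (Epi _)) _.
apply: (QD AD); first exact: EZ (Epi a).
exact: Epi.
Qed.

Lemma pi_ac x : A x -> pi x = 0.
Proof.
move=> h; apply: sc_eq; rewrite scale0r.
apply: (Qtrans AD) (Qsym AN (Epi _)) _.
by rewrite /Q subr0.
Qed.

Lemma piZ r x : pi (r *: x) = r * pi x.
Proof. by rewrite -[r *: x]addr0 pi_lin (pi_ac A0) addr0. Qed.

Lemma pi_b0 : pi b0 = 1.
Proof.
apply: sc_eq; rewrite scale1r; exact: (Qsym AN (Epi _)).
Qed.

Lemma pi_A x : pi x = 0 -> A x.
Proof. by move=> h; have := Hpi x; rewrite h scale0r subr0. Qed.

Definition beta0 := fun a b : B => pi (mul a b).

Lemma beta_IBF : is_IBF mul beta0.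
Proof.
split=> [r a a' b|r a b b'|a b c|a b c]; rewrite /beta0.
- by rewrite mulZDl pi_lin.
- by rewrite mulZDr pi_lin.
- exact/pi_congr/ac_associator.
- have h1 : pi (mul (mul a b) c) = pi (mul a (mul b c)).
    exact/pi_congr/ac_associator.
  have h2 : pi (mul a (mul b c)) = pi (mul (mul b c) a).
    exact/pi_congr/ac_commutator.
  have h3 : pi (mul (mul b c) a) = pi (mul b (mul c a)).
    exact/pi_congr/ac_associator.
  by rewrite h1 h2 h3.
Qed.

Notation F := (ibf_rel mul).
Notation G := (Q F).
Let F0 : F 0. Proof. exact: rel_zero. Qed.
Let FD x y : F x -> F y -> F (x + y). Proof. exact: rel_add. Qed.
Let FN x : F x -> F (- x). Proof. by move=> h; rewrite -scaleN1r; apply: rel_scale. Qed.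
Let g0 := gen b0 one.

Lemma genD u v w : G (gen (u + v) w) (gen u w + gen v w).
Proof. by have := rel_addl mul u v w; rewrite /Q opprD addrA. Qed.
Lemma genN v w : G (gen (- v) w) (- gen v w).
Proof. by have := rel_scalel mul (-1) v w; rewrite !scaleN1r. Qed.
Lemma genZ r v w : G (gen (r *: v) w) (r *: gen v w).
Proof. exact: rel_scalel. Qed.
Lemma gen_mul a b : G (gen a b) (gen (mul a b) one).
Proof. by apply: (Qsym FN); have := rel_ibf1 mul a b one; rewrite mulx1. Qed.
Lemma genB u v w : G (gen (u - v) w) (gen u w - gen v w).
Proof.
apply: (Qtrans FD) (genD _ _ _) _.
apply: (QD FD); [exact: (Qrefl F0) | exact: genN].
Qed.

Lemma gen_ac x : A x -> G (gen x one) 0.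
Proof.
elim=> {x} [a b c|a b||x y _ hx _ hy|x _ hx].
- rewrite /associator -(subrr (gen (mul (mul a b) c) one)).
  apply: (Qtrans FD) (genB _ _ _) _.
  apply: (QB FD FN); first exact: (Qrefl F0).
  apply: (Qtrans FD) (Qsym FN (gen_mul a (mul b c))) _.
  have h : G (gen (mul a b) c) (gen a (mul b c)) := rel_ibf1 mul a b c.
  apply: (Qtrans FD) (Qsym FN h) _.
  exact: gen_mul.
- rewrite /commutator -(subrr (gen (mul b a) one)).
  apply: (Qtrans FD) (genB _ _ _) _.
  apply: (QB FD FN); last exact: (Qrefl F0).
  apply: (Qtrans FD) _ (gen_mul b a).
  by have := rel_ibf2 mul a b one; rewrite mul1x.
- by have := rel_scalel mul 0 0 one; rewrite scaler0 scale0r /Q !subr0.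
- rewrite -(addr0 0); apply: (Qtrans FD) (genD _ _ _) _.
  exact: (QD FD).
- rewrite -oppr0; apply: (Qtrans FD) (genN _ _) _.
  exact: (QN FN).
Qed.

Lemma gen_key y : G (gen y one) (pi y *: g0).
Proof.
have e : y = pi y *: b0 + (y - pi y *: b0) by rewrite addrC subrK.
rewrite {1}e.
apply: (Qtrans FD) (genD _ _ _) _.
rewrite -[X in Q _ _ X]addr0.
apply: (QD FD); first exact: genZ.
exact: gen_ac.
Qed.

Lemma gen_all a b : G (gen a b) (beta0 a b *: g0).
Proof. exact: (Qtrans FD) (gen_mul _ _) (gen_key _). Qed.

Notation bl := (beta_lift beta0).

Lemma bl_gen a b : bl (gen a b) = beta0 a b.
Proof. by rewrite /beta_lift /gen liftU /GRing.scale /= mul1r. Qed.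
Lemma blD D D' : bl (D + D') = bl D + bl D'.
Proof. by rewrite /beta_lift raddfD. Qed.
Lemma blB D D' : bl (D - D') = bl D - bl D'.
Proof. by rewrite /beta_lift raddfB. Qed.
Lemma blZ r D : bl (r *: D) = r * bl D.
Proof. by rewrite /beta_lift fglift_scale. Qed.
Lemma bl0 : bl 0 = 0.
Proof. by rewrite /beta_lift raddf0. Qed.

Lemma bl_rel D : F D -> bl D = 0.
Proof.
have [h1 h2 h3 h4] := beta_IBF.
elim=> {D} [a a' b|a b b'|r a b|r a b|a b c|a b c||D E' _ hD _ hE|r D _ hD].
- by rewrite !blB !bl_gen /beta0 -{1}[a]scale1r mulZDl pi_lin mul1r -addrA -opprD subrr.
- by rewrite !blB !bl_gen /beta0 -{1}[b]scale1r mulZDr pi_lin mul1r -addrA -opprD subrr.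
- by rewrite blB blZ !bl_gen /beta0 mulZl piZ subrr.
- by rewrite blB blZ !bl_gen /beta0 mulZr piZ subrr.
- by rewrite blB !bl_gen h3 subrr.
- by rewrite blB !bl_gen h4 subrr.
- exact: bl0.
- by rewrite blD hD hE addr0.
- by rewrite blZ hD mulr0.
Qed.

Lemma bl_all D : G D (bl D *: g0).
Proof.
rewrite -(freeg_sumE D).
elim/big_ind: _.
- by rewrite bl0 scale0r; exact: (Qrefl F0).
- move=> x y hx hy; rewrite blD scalerDl; exact: (QD FD).
- move=> [a b] _.
  rewrite -[coeff _ D](mulr1) -scaleU blZ -scalerA /Q -scalerBr; apply: rel_scale.
  by rewrite bl_gen; exact: gen_all.
Qed.

End Main.

Theorem corollary6p9 (R : comNzRingType) (B : lmodType R) (mul : B -> B -> B) (one : B)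
  (b0 : B) (pi : B -> R) :
  unital_algebra mul one ->
  (* B = R b0 + ac(B) *)
  (forall b : B, exists (r : R) (x : B), in_ac mul x /\ b = r *: b0 + x) ->
  (* the sum is direct: R b0 meets ac(B) trivially *)
  (forall r : R, in_ac mul (r *: b0) -> r *: b0 = 0) ->
  (* R b0 is free with basis {b0} *)
  (forall r : R, r *: b0 = 0 -> r = 0) ->
  (* pi is defined by b = pi(b) b0 + b_ac with b_ac in ac(B) *)
  (forall b : B, in_ac mul (b - pi b *: b0)) ->
  let beta0 := fun a b : B => pi (mul a b) in
  [/\ is_IBF mul beta0,
      IBF_principle mul beta0 &
      [/\
      (* tilde beta0 : AC(B) = B/ac(B) -> R, bar b |-> beta0(b,1), is well defined, *)
      (forall b b' : B, in_ac mul (b - b') -> beta0 b one = beta0 b' one),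
      (* R-linear, *)
      (forall (r : R) (b b' : B), beta0 (r *: b + b') one = r * beta0 b one + beta0 b' one),
      (* injective on AC(B) (its kernel is ac(B)) *)
      (forall b : B, beta0 b one = 0 -> in_ac mul b) &
      (* and surjective *)
      (forall r : R, exists b : B, beta0 b one = r)]].
Proof.
move=> HU _ Hdir Hfree Hpi beta.
have hIBF := @beta_IBF R B mul one b0 pi HU Hdir Hfree Hpi.
have m1 := @mulx1 R B mul one HU.
have pc := @pi_congr R B mul b0 pi Hdir Hfree Hpi.
have pl := @pi_lin R B mul one b0 pi HU Hdir Hfree Hpi.
have pZ := @piZ R B mul one b0 pi HU Hdir Hfree Hpi.
have p1 := @pi_b0 R B mul b0 pi Hdir Hfree Hpi.
split.
- exact: hIBF.
- split.
  + exact: hIBF.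
  + move=> D; split; last exact: @bl_rel R B mul one b0 pi HU Hdir Hfree Hpi D.
    move=> hD; have := @bl_all R B mul one b0 pi HU Hpi D.
    by rewrite /beta0 in hD *; rewrite hD scale0r /Q subr0.
  + move=> r; exists (gen (r *: b0) one).
    by rewrite bl_gen /beta0 m1 pZ p1 mulr1.
- split.
  + by move=> b b' h; rewrite /beta !m1; apply: pc.
  + by move=> r b b'; rewrite /beta !m1 pl.
  + by move=> b; rewrite /beta m1; exact: (@pi_A R B mul b0 pi Hpi b).
  + by move=> r; exists (r *: b0); rewrite /beta m1 pZ p1 mulr1.
Qed.
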